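(* Let $f(x)=\frac1n\sum_{i=1}^nf_i(x)$ on $\mathbb{R}^d$, where each $f_i$ is convex, $L_i$-smooth and non-negative, and let $x^*$ be a minimizer of $f$. Consider SGD with the SPS$^\ell_{\max}$ stepsize (defined in the context) using $\ell^*_{\mathcal S}=0$ for all $\mathcal S\subseteq[n]$, and let $\alpha:=\min\{\frac1{2cL_{\max}},\gamma_b\}$ with $L_{\max}=\max_iL_i$. (i) If $c=1$, then for every $K\ge1$, $\mathbb{E}[f(\bar x^K)-f(x^* )]\le\frac{\|x^0-x^*\|^2}{\alpha K}+\frac{2\gamma_bf(x^* )}{\alpha}$, where $\bar x^K=\frac1K\sum_{k=0}^{K-1}x^k$. (ii) If in addition $f$ is $\mu$-strongly convex and $c\ge1/2$, then for every $k\ge0$, $\mathbb{E}\|x^k-x^*\|^2\le(1-\mu\alpha)^k\|x^0-x^*\|^2+\frac{2\gamma_bf(x^* )}{\mu\alpha}$.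
   Context: Minibatches: fix a batch size $B$; at each iteration a subset $\mathcal S_k\subseteq[n]$, $|\mathcal S_k|=B$, is sampled uniformly at random, independently across iterations. For $\mathcal S\subseteq[n]$, $f_{\mathcal S}:=\frac1{|\mathcal S|}\sum_{i\in\mathcal S}f_i$. SGD: $x^{k+1}=x^k-\gamma_k\nabla f_{\mathcal S_k}(x^k)$ from given $x^0$. SPS$^\ell_{\max}$ stepsize with $\ell^*=0$: $\gamma_k=\min\left\{\frac{f_{\mathcal S_k}(x^k)}{c\|\nabla f_{\mathcal S_k}(x^k)\|^2},\ \gamma_b\right\}$ with constants $c,\gamma_b>0$; if $\nabla f_{\mathcal S_k}(x^k)=0$ the iterate is not updated. *)

(* Defs.v *)
From HB Require Import structures.
From mathcomp Require Import all_boot all_order all_algebra.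
From mathcomp Require Import all_classical all_reals all_analysis.
Set Implicit Arguments. Unset Strict Implicit. Unset Printing Implicit Defensive.
Import Order.TTheory GRing.Theory Num.Theory.
Import numFieldNormedType.Exports.
Local Open Scope ring_scope.

Section SPS.
Variables (R : realType) (d n : nat).

Notation vec := 'rV[R]_d.

Definition dotv (u v : vec) : R := \sum_(j < d) u 0 j * v 0 j.
Definition sqnorm (u : vec) : R := dotv u u.
Definition enorm (u : vec) : R := Num.sqrt (sqnorm u).

(* Gradient: the row vector of partial derivatives (Frechet
   differentiability is assumed separately). *)
Definition grad (f : vec -> R) (x : vec) : vec :=
  \row_(j < d) ('D_(delta_mx 0 j : vec) f x).

Definition convex_fun (f : vec -> R) : Prop :=
  forall (x y : vec) (t : R), 0 <= t <= 1 ->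
    f ((1 - t) *: x + t *: y) <= (1 - t) * f x + t * f y.

Definition strongly_convex (mu : R) (f : vec -> R) : Prop :=
  forall (x y : vec) (t : R), 0 <= t <= 1 ->
    f ((1 - t) *: x + t *: y) <=
      (1 - t) * f x + t * f y - mu / 2 * t * (1 - t) * sqnorm (x - y).

Definition smooth (L : R) (f : vec -> R) : Prop :=
  (forall x, differentiable f x) /\
  forall x y, enorm (grad f x - grad f y) <= L * enorm (x - y).

Variable fs : 'I_n -> vec -> R.

Definition favg (x : vec) : R := n%:R^-1 * \sum_(i < n) fs i x.

Definition fS (S : {set 'I_n}) (x : vec) : R :=
  (#|S|%:R)^-1 * \sum_(i in S) fs i x.
Definition gradS (S : {set 'I_n}) (x : vec) : vec :=
  (#|S|%:R)^-1 *: \sum_(i in S) grad (fs i) x.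

Variables (c gb : R).

Definition sps_step (S : {set 'I_n}) (x : vec) : R :=
  Num.min (fS S x / (c * sqnorm (gradS S x))) gb.

Definition sgd_step (x : vec) (S : {set 'I_n}) : vec :=
  if gradS S x == 0 then x else x - sps_step S x *: gradS S x.

Definition sgd_iter (x0 : vec) (s : seq {set 'I_n}) : vec :=
  foldl sgd_step x0 s.

Variable B : nat.

(* Expectation over K i.i.d. minibatches, each uniform among the B-subsets
   of [n]: uniform average over all K-tuples of B-subsets. *)
Definition batches_ok K (t : K.-tuple {set 'I_n}) : bool :=
  all (fun S : {set 'I_n} => #|S| == B) (tval t).

Definition Exp K (g : K.-tuple {set 'I_n} -> R) : R :=
  (\sum_(t : K.-tuple {set 'I_n} | batches_ok t) g t) /
  (#|[set t : K.-tuple {set 'I_n} | batches_ok t]|%:R).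

Definition xbar (x0 : vec) K (t : K.-tuple {set 'I_n}) : vec :=
  K%:R^-1 *: \sum_(k < K) sgd_iter x0 (take k (tval t)).

End SPS.

Definition Lmax (R : realType) (n : nat) (L : 'I_n -> R) : R :=
  \big[Num.max/0]_(i < n) L i.

(* Main.v *)
Require Import Defs.
From HB Require Import structures.
From mathcomp Require Import all_boot all_order all_algebra all_fingroup.
From mathcomp Require Import all_classical all_reals all_analysis.
From mathcomp Require Import ring lra.
Import Order.TTheory GRing.Theory Num.Theory.
Import numFieldNormedType.Exports.
Local Open Scope ring_scope.

Module Helpers.
Set Implicit Arguments. Unset Strict Implicit. Unset Printing Implicit Defensive.

Section Vec.
Variables (R : realType) (d : nat).
Notation vec := 'rV[R]_d.
Implicit Types u v w : vec.

Lemma dotvC u v : dotv u v = dotv v u.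
Proof. by apply: eq_bigr => j _; rewrite mulrC. Qed.

Lemma dotvDl u v w : dotv (u + w) v = dotv u v + dotv w v.
Proof. by rewrite /dotv -big_split; apply: eq_bigr => j _; rewrite mxE mulrDl. Qed.

Lemma dotvZl (s : R) u v : dotv (s *: u) v = s * dotv u v.
Proof. by rewrite /dotv mulr_sumr; apply: eq_bigr => j _; rewrite mxE mulrA. Qed.

Lemma dotvNl u v : dotv (- u) v = - dotv u v.
Proof. by rewrite -scaleN1r dotvZl mulN1r. Qed.

Lemma dotvBl u v w : dotv (u - w) v = dotv u v - dotv w v.
Proof. by rewrite dotvDl dotvNl. Qed.

Lemma dotvDr u v w : dotv v (u + w) = dotv v u + dotv v w.
Proof. by rewrite dotvC dotvDl !(dotvC v). Qed.

Lemma dotvZr (s : R) u v : dotv v (s *: u) = s * dotv v u.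
Proof. by rewrite dotvC dotvZl dotvC. Qed.

Lemma dotvBr u v w : dotv v (u - w) = dotv v u - dotv v w.
Proof. by rewrite dotvC dotvBl !(dotvC v). Qed.

Lemma dotv0l v : dotv 0 v = 0.
Proof. by rewrite /dotv big1 // => j _; rewrite mxE mul0r. Qed.

Lemma dotv_suml (I : finType) (P : pred I) (F : I -> vec) v :
  dotv (\sum_(i | P i) F i) v = \sum_(i | P i) dotv (F i) v.
Proof.
elim/big_rec2: _ => [|i y1 y2 _ <-]; first exact: dotv0l.
by rewrite dotvDl.
Qed.

Lemma sqnorm_ge0 u : 0 <= sqnorm u.
Proof. by apply: sumr_ge0 => j _; exact: mulr_ge0_le0 || rewrite -expr2 sqr_ge0. Qed.

Lemma sqnorm_eq0 u : sqnorm u = 0 -> u = 0.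
Proof.
move=> /eqP; rewrite /sqnorm /dotv psumr_eq0 => [/allP H|j _]; last by rewrite -expr2 sqr_ge0.
apply/rowP => j; rewrite mxE; have := H j (mem_index_enum _).
by rewrite /= mulf_eq0 orbb => /eqP.
Qed.

Lemma sqnormB u v : sqnorm (u - v) = sqnorm u - 2 * dotv u v + sqnorm v.
Proof.
rewrite /sqnorm !dotvBl !dotvBr (dotvC v u); ring.
Qed.

Lemma sqnormZ (s : R) u : sqnorm (s *: u) = s ^+ 2 * sqnorm u.
Proof. by rewrite /sqnorm dotvZl dotvZr mulrA expr2. Qed.

Lemma sqnormN u : sqnorm (- u) = sqnorm u.
Proof. by rewrite /sqnorm dotvNl dotvC dotvNl opprK. Qed.

Lemma CS u v : dotv u v ^+ 2 <= sqnorm u * sqnorm v.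
Proof.
have Q t : 0 <= sqnorm u - 2 * t * dotv u v + t ^+ 2 * sqnorm v.
  by have := sqnorm_ge0 (u - t *: v); rewrite sqnormB dotvZr sqnormZ mulrA.
have hv := sqnorm_ge0 v; have hu := sqnorm_ge0 u.
have [v0|vpos] := eqVneq (sqnorm v) 0.
  have [e0|en0] := eqVneq (dotv u v) 0.
    by rewrite e0 v0 expr0n /= mulr0.
  have := Q ((sqnorm u + 1) / (2 * dotv u v)); rewrite v0 mulr0 addr0.
  have -> : 2 * ((sqnorm u + 1) / (2 * dotv u v)) * dotv u v = sqnorm u + 1.
    by field; rewrite en0.
  lra.
have vp : 0 < sqnorm v by rewrite lt_def vpos hv.
have := Q (dotv u v / sqnorm v).
rewrite -(@ler_pM2r _ (sqnorm v)) // mul0r => H.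
set e := dotv u v in H *; set a := sqnorm u in H *; set b := sqnorm v in H vp *.
have E : (a - 2 * (e / b) * e + (e / b) ^+ 2 * b) * b = a * b - e ^+ 2.
  by field; rewrite gt_eqF.
rewrite E in H; lra.
Qed.

Lemma CS_lip u v (M : R) : 0 <= M -> sqnorm u <= M ^+ 2 * sqnorm v ->
  dotv u v <= M * sqnorm v.
Proof.
move=> M0 H; have := CS u v; have hv := sqnorm_ge0 v.
have hMv : 0 <= M * sqnorm v by apply: mulr_ge0.
move=> C; rewrite leNgt; apply/negP => lt.
have : (M * sqnorm v) ^+ 2 < dotv u v ^+ 2.
  rewrite !expr2; nra.
have : sqnorm u * sqnorm v <= M ^+ 2 * sqnorm v * sqnorm v by apply: ler_wpM2r.
rewrite exprMn expr2 (expr2 (sqnorm v)). nra.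
Qed.

End Vec.


Section Desc.
Variables (R : realType) (d : nat).
Notation vec := 'rV[R]_d.
Implicit Types u v w x : vec.

Lemma D1 (f : vec -> R) x v : differentiable f x -> 'D_v f x = dotv (grad f x) v.
Proof.
move=> df; rewrite deriveE // {1}[v]row_sum_delta linear_sum /dotv.
apply: eq_bigr => j _; rewrite linearZ /= mxE -deriveE // mulrC.
by [].

Qed.

Lemma D2 (f : vec -> R) x v t : derivable f (x + t *: v) v ->
  is_derive t 1 (fun s : R => f (x + s *: v)) ('D_v f (x + t *: v)).
Proof.
move=> df.
have E : (fun h : R => h^-1 *: (((fun s : R => f (x + s *: v)) \o shift t) (h *: 1) - f (x + t *: v)))
  = (fun h : R => h^-1 *: ((f \o shift (x + t *: v)) (h *: v) - f (x + t *: v))).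
  apply/funext => h /=; congr (_ *: (f _ - _)).
  by rewrite /shift /= [h *: 1]mulr1 scalerDl addrCA addrA.
apply: DeriveDef.
  by rewrite /derivable E.
by rewrite /derive E.
Qed.

End Desc.

Section Desc2.
Variables (R : realType) (d : nat).
Notation vec := 'rV[R]_d.

Lemma descent (f : vec -> R) (Lc : R) x v :
  (forall y, differentiable f y) -> 0 <= Lc ->
  (forall y z, sqnorm (grad f y - grad f z) <= Lc ^+ 2 * sqnorm (y - z)) ->
  f (x + v) <= f x + dotv (grad f x) v + Lc / 2 * sqnorm v.
Proof.
move=> df L0 lip.
set a := dotv (grad f x) v; set b := Lc / 2 * sqnorm v.
pose g := fun s : R => f (x + s *: v).
pose dg := fun s : R => dotv (grad f (x + s *: v)) v.
have Hg (s : R) : is_derive s (1:R) g (dg s).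
  apply: is_derive_eq; first by apply: D2; exact: diff_derivable.
  by rewrite D1.
have Hp (s : R) : is_derive s (1:R) ((@id R) * cst a + (@id R) ^+ 2 * cst b) (a + 2 * s * b).
  apply: is_derive_eq.
  rewrite /cst !scaler0 !add0r expr1 /GRing.scale /= !mulr1; ring.
pose P := ((@id R) * cst a + (@id R) ^+ 2 * cst b).
have Hh (s : R) : is_derive s (1:R) (g - P) (dg s - (a + 2 * s * b)).
  exact: is_deriveB.
have cont : {in `[(0:R), 1], forall s, derivable (g - P) s 1}.
  move=> s _; exact: ex_derive.
have [c /andP[c0 c1] E] := MVT (ltr01 : (0:R) < 1) (fun s _ => Hh s)
   (derivable_within_continuous cont).
have h1 : (g - P) 1 = f (x + v) - (a + b).
  by rewrite /g /P !fctE /cst scale1r expr1n !mul1r.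
have h0 : (g - P) 0 = f x.
  by rewrite /g /P !fctE /cst scale0r addr0 expr0n /= !mul0r addr0 subr0.
rewrite h1 h0 subr0 mulr1 in E.
have key : dg c - (a + 2 * c * b) <= 0.
  rewrite /dg /a /b (_ : forall p q r : R, p - (q + r) = (p - q) - r); last by move=> *; ring.
  rewrite -dotvBl.
  have c0' : 0 <= c by rewrite ltW.
  have H1 := lip (x + c *: v) x.
  rewrite addrAC subrr add0r sqnormZ mulrA -exprMn in H1.
  have H3 := @CS_lip R d (grad f (x + c *: v) - grad f x) v (Lc * c) (mulr_ge0 L0 c0') H1.
  have -> : 2 * c * (Lc / 2 * sqnorm v) = Lc * c * sqnorm v by field.
  lra.
lra.
Qed.
End Desc2.


Lemma elem_lim (R : realFieldType) (A C D : R) : 0 <= D ->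
  (forall t, 0 < t -> t <= 1 -> A <= C + t * D) -> A <= C.
Proof.
move=> D0 H; rewrite leNgt; apply/negP => AC.
have [D00|Dp] := eqVneq D 0.
  by have := H 1 ltr01 (lexx _); rewrite D00 mulr0 addr0; lra.
have Dpos : 0 < D by rewrite lt_def Dp D0.
have [le|lt] := lerP (A - C) (2 * D).
  have tp : 0 < (A - C) / (2 * D) by apply: divr_gt0; lra.
  have t1 : (A - C) / (2 * D) <= 1 by rewrite ler_pdivrMr; lra.
  have := H _ tp t1.
  have -> : (A - C) / (2 * D) * D = (A - C) / 2 by field; rewrite gt_eqF.
  lra.
by have := H 1 ltr01 (lexx _); lra.
Qed.

Section Gen.
Variables (R : realType) (d : nat).
Notation vec := 'rV[R]_d.

Definition lipsq (Lc : R) (f : vec -> R) :=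
  (forall y, differentiable f y) /\
  (forall y z, sqnorm (grad f y - grad f z) <= Lc ^+ 2 * sqnorm (y - z)).

Lemma upper (f : vec -> R) Lc x v : 0 <= Lc -> lipsq Lc f ->
  f (x + v) <= f x + dotv (grad f x) v + Lc / 2 * sqnorm v.
Proof. by move=> L0 [df lip]; apply: descent. Qed.

Lemma lower (f : vec -> R) Lc x v : 0 <= Lc -> lipsq Lc f ->
  f x + dotv (grad f x) v - 3 / 2 * Lc * sqnorm v <= f (x + v).
Proof.
move=> L0 [df lip].
have H := descent (x + v) (- v) df L0 lip.
rewrite addrK sqnormN in H.
have H1 := lip x (x + v); rewrite opprD addrA subrr add0r sqnormN in H1.
have H2 := @CS_lip R d _ v Lc L0 H1.
rewrite -scaleN1r dotvZr in H.
have E1 : Lc / 2 * sqnorm v = (Lc * sqnorm v) / 2 by ring.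
have E2 : 3 / 2 * Lc * sqnorm v = 3 / 2 * (Lc * sqnorm v) by ring.
rewrite E1 in H; rewrite E2; set P := Lc * sqnorm v in H H2 *.
rewrite dotvBl in H2. set fy := f (x + v) in H *. set g1 := dotv (grad f (x + v)) v in H H2. lra.
Qed.

Lemma cvx1 (f : vec -> R) Lc x y : 0 <= Lc -> lipsq Lc f -> convex_fun f ->
  f x + dotv (grad f x) (y - x) <= f y.
Proof.
move=> L0 sm cv; set v := y - x.
suff : dotv (grad f x) v <= f y - f x by lra.
apply: (@elem_lim R _ _ (3 / 2 * Lc * sqnorm v)).
  by apply: mulr_ge0; [apply: mulr_ge0; lra|exact: sqnorm_ge0].
move=> t t0 t1.
have := cv x y t; rewrite ltW //= t1 => /(_ isT).
have -> : (1 - t) *: x + t *: y = x + t *: v.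
  by rewrite /v scalerBr scalerBl scale1r; rewrite addrAC -!addrA; congr (_ + _); rewrite addrC.
have := lower x (t *: v) L0 sm; rewrite dotvZr sqnormZ => H1 H2.
have : t * dotv (grad f x) v <= t * (f y - f x + t * (3 / 2 * Lc * sqnorm v)).
  by nra.
by rewrite ler_pM2l.
Qed.

End Gen.


Lemma smooth_lipsq (R : realType) d (f : 'rV[R]_d -> R) (L Lm : R) :
  0 < L -> L <= Lm -> smooth L f -> lipsq Lm f.
Proof.
move=> L0 LLm [df lip]; split => // y z.
have := lip y z; rewrite /enorm => H.
have H0 := sqrtr_ge0 (sqnorm (grad f y - grad f z)).
have H1 : sqnorm (grad f y - grad f z) <= (L * Num.sqrt (sqnorm (y - z))) ^+ 2.
  rewrite -[X in X <= _](@sqr_sqrtr _ (sqnorm _)) ?sqnorm_ge0 //.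
  by rewrite !expr2; apply: ler_pM.
apply: (le_trans H1); rewrite exprMn sqr_sqrtr ?sqnorm_ge0 //.
apply: ler_wpM2r; first exact: sqnorm_ge0.
rewrite !expr2; apply: ler_pM; lra.
Qed.

Lemma dotv_sumr (R : realType) d (I : finType) (P : pred I) (F : I -> 'rV[R]_d) v :
  dotv v (\sum_(i | P i) F i) = \sum_(i | P i) dotv v (F i).
Proof. by rewrite dotvC dotv_suml; apply: eq_bigr => i _; rewrite dotvC. Qed.

Section Main.
Variables (R : realType) (d n : nat) (fs : 'I_n -> 'rV[R]_d -> R) (Lm : R).
Notation vec := 'rV[R]_d.
Hypothesis Lm0 : 0 < Lm.
Hypothesis Hsm : forall i, lipsq Lm (fs i).
Hypothesis Hcvx : forall i, convex_fun (fs i).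
Hypothesis Hnn : forall i x, 0 <= fs i x.

Definition gbar (x : vec) : vec := n%:R^-1 *: \sum_(i < n) grad (fs i) x.

Lemma fS_cvx (S : {set 'I_n}) (x y : vec) : fS fs S x + dotv (gradS fs S x) (y - x) <= fS fs S y.
Proof.
rewrite /fS /gradS dotvZl dotv_suml -mulrDr -big_split /=.
apply: ler_wpM2l; first by rewrite invr_ge0 ler0n.
apply: ler_sum => i _; apply: (cvx1 (Lc:=Lm)) (Hcvx i); [exact: ltW|exact: Hsm].
Qed.

Lemma favg_cvx (x y : vec) : favg fs x + dotv (gbar x) (y - x) <= favg fs y.
Proof.
rewrite /favg /gbar dotvZl dotv_suml -mulrDr -big_split /=.
apply: ler_wpM2l; first by rewrite invr_ge0 ler0n.
apply: ler_sum => i _; apply: (cvx1 (Lc:=Lm)) (Hcvx i); [exact: ltW|exact: Hsm].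
Qed.

Lemma sum_const_mul (I : finType) (P : pred I) (k : R) :
  \sum_(i | P i) k = #|P|%:R * k.
Proof. by rewrite sumr_const mulr_natl. Qed.

Lemma fS_upper (S : {set 'I_n}) (x v : vec) : (0 < #|S|)%N ->
  fS fs S (x + v) <= fS fs S x + dotv (gradS fs S x) v + Lm / 2 * sqnorm v.
Proof.
move=> S0.
have -> : Lm / 2 * sqnorm v = #|S|%:R^-1 * \sum_(i in S) (Lm / 2 * sqnorm v).
  by rewrite sumr_const -[X in _ = _ * X]mulr_natl mulrA mulVf ?mul1r // pnatr_eq0 -lt0n.
rewrite /fS /gradS dotvZl dotv_suml -!mulrDr -!big_split /=.
apply: ler_wpM2l; first by rewrite invr_ge0 ler0n.
apply: ler_sum => i _; apply: (upper (Lc:=Lm)); [exact: ltW|exact: Hsm].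
Qed.

Lemma fS_nn (S : {set 'I_n}) (x : vec) : 0 <= fS fs S x.
Proof.
apply: mulr_ge0; first by rewrite invr_ge0 ler0n.
by apply: sumr_ge0 => i _.
Qed.

Lemma fS_grad (S : {set 'I_n}) (x : vec) : (0 < #|S|)%N -> sqnorm (gradS fs S x) <= 2 * Lm * fS fs S x.
Proof.
move=> S0; set g := gradS fs S x; set G := sqnorm g; set F := fS fs S x.
have h2 := fS_upper x (- (Lm^-1 *: g)) S0.
have h1 := fS_nn S (x + - (Lm^-1 *: g)).
have e1 : dotv g (- (Lm^-1 *: g)) = - (Lm^-1 * G) by rewrite dotvC dotvNl dotvZl.
rewrite e1 sqnormN sqnormZ -/g -/G -/F in h2.
have hL : Lm / 2 * (Lm^-1 ^+ 2 * G) = G / (2 * Lm) by field; rewrite gt_eqF.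
have E : - (Lm^-1 * G) + G / (2 * Lm) = - (G / (2 * Lm)) by field; rewrite gt_eqF.
rewrite hL -addrA E in h2.
have : G / (2 * Lm) <= F by lra.
by rewrite ler_pdivrMr ?mulr_gt0 // mulrC.
Qed.

Lemma favg_upper (x v : vec) : (0 < n)%N ->
  favg fs (x + v) <= favg fs x + dotv (gbar x) v + Lm / 2 * sqnorm v.
Proof.
move=> n0.
have -> : Lm / 2 * sqnorm v = n%:R^-1 * \sum_(i < n) (Lm / 2 * sqnorm v).
  by rewrite sumr_const card_ord -[X in _ = _ * X]mulr_natl mulrA mulVf ?mul1r // pnatr_eq0 -lt0n.
rewrite /favg /gbar dotvZl dotv_suml -!mulrDr -!big_split /=.
apply: ler_wpM2l; first by rewrite invr_ge0 ler0n.
apply: ler_sum => i _; apply: (upper (Lc:=Lm)); [exact: ltW|exact: Hsm].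
Qed.

Lemma favg_lower (x v : vec) : (0 < n)%N ->
  favg fs x + dotv (gbar x) v - 3 / 2 * Lm * sqnorm v <= favg fs (x + v).
Proof.
move=> n0.
have -> : 3 / 2 * Lm * sqnorm v = n%:R^-1 * \sum_(i < n) (3 / 2 * Lm * sqnorm v).
  by rewrite sumr_const card_ord -[X in _ = _ * X]mulr_natl mulrA mulVf ?mul1r // pnatr_eq0 -lt0n.
rewrite /favg /gbar dotvZl dotv_suml -!mulrDr -mulrBr -!big_split -sumrB /=.
apply: ler_wpM2l; first by rewrite invr_ge0 ler0n.
apply: ler_sum => i _; apply: (lower (Lc:=Lm)); [exact: ltW|exact: Hsm].
Qed.

Lemma favg_SC (mu : R) (x y : vec) : (0 < n)%N -> 0 < mu -> strongly_convex mu (favg fs) ->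
  dotv (gbar x) (y - x) <= favg fs y - favg fs x - mu / 2 * sqnorm (y - x).
Proof.
move=> n0 mu0 sc; set v := y - x.
apply: (@elem_lim R _ _ ((mu / 2 + 3 / 2 * Lm) * sqnorm v)).
  apply: mulr_ge0; last exact: sqnorm_ge0.
  apply: addr_ge0; apply: mulr_ge0; rewrite ?invr_ge0 ?ler0n ?ltW //; apply: mulr_ge0; rewrite ?invr_ge0 ?ler0n //.
move=> t t0 t1.
have := sc x y t; rewrite ltW //= t1 => /(_ isT).
have -> : (1 - t) *: x + t *: y = x + t *: v.
  by rewrite /v scalerBr scalerBl scale1r; rewrite addrAC -!addrA; congr (_ + _); rewrite addrC.
rewrite (_ : x - y = - v); last by rewrite /v opprB.
rewrite sqnormN.
have := favg_lower x (t *: v) n0; rewrite dotvZr sqnormZ => H1 H2.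
have : t * dotv (gbar x) v <= t * (favg fs y - favg fs x - mu / 2 * sqnorm v +
    t * ((mu / 2 + 3 / 2 * Lm) * sqnorm v)).
  by nra.
by rewrite ler_pM2l.
Qed.

Lemma mu_le (mu : R) : (0 < d)%N -> (0 < n)%N -> 0 < mu -> strongly_convex mu (favg fs) ->
  mu <= Lm.
Proof.
move=> d0 n0 mu0 sc.
pose v : vec := delta_mx 0 (Ordinal d0).
have h1 := favg_upper 0 v n0.
have h2 := favg_SC 0 v n0 mu0 sc.
rewrite add0r in h1; rewrite subr0 in h2.
have vp : 0 < sqnorm v.
  rewrite lt_def sqnorm_ge0 andbT; apply/eqP => /sqnorm_eq0 /rowP /(_ (Ordinal d0)).
  by rewrite !mxE eqxx /= => /eqP; rewrite oner_eq0.
have : mu / 2 * sqnorm v <= Lm / 2 * sqnorm v by lra.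
rewrite ler_pM2r // ler_pM2r //; lra.
Qed.

Lemma favg_jensen K (p : 'I_K -> vec) : (0 < K)%N ->
  favg fs (K%:R^-1 *: \sum_(k < K) p k) <= K%:R^-1 * \sum_(k < K) favg fs (p k).
Proof.
move=> K0; set xb := K%:R^-1 *: _.
have Kn0 : K%:R != 0 :> R by rewrite pnatr_eq0 -lt0n.
have S1 := @ler_sum _ _ (index_enum 'I_K) xpredT _ _ (fun k _ => favg_cvx xb (p k)).
rewrite big_split /= -dotv_sumr sumrB !sumr_const !card_ord in S1.
have E : \sum_(i < K) p i - xb *+ K = 0.
  by rewrite /xb -scaler_nat scalerA mulfV // scale1r subrr.
rewrite E (_ : dotv (gbar xb) 0 = 0) ?addr0 in S1; last first.
  by rewrite dotvC dotv0l.
rewrite -[X in X <= _](mulKf Kn0 (favg fs xb)).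
apply: ler_wpM2l; first by rewrite invr_ge0 ler0n.
by rewrite mulr_natl.
Qed.

End Main.


Section Prob.
Variables (R : realType) (n B : nat).
Notation T := {set 'I_n}.

Lemma sum_tuple_cons K (F : K.+1.-tuple T -> R) :
  \sum_(t : K.+1.-tuple T | batches_ok B t) F t =
  \sum_(S : T | #|S| == B) \sum_(t : K.-tuple T | batches_ok B t) F [tuple of S :: t].
Proof.
rewrite pair_big /=.
rewrite (reindex (fun p : T * K.-tuple T => [tuple of p.1 :: p.2])) /=.
  by apply: eq_bigl => p.
exists (fun t : K.+1.-tuple T => (thead t, [tuple of behead t])) => [p _|t _].
  by case: p => a t; congr pair; apply: val_inj.
by rewrite [in RHS](tuple_eta t); apply: val_inj.
Qed.

Definition NR : R := #|[set S : T | #|S| == B]|%:R.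

Lemma sum_sets_const (k : R) : \sum_(S : T | #|S| == B) k = NR * k.
Proof.
rewrite (eq_bigl (fun S => S \in [set S : T | #|S| == B])); last by move=> S; rewrite inE.
by rewrite sumr_const mulr_natl.
Qed.

Lemma den_eq K : #|[set t : K.-tuple T | batches_ok B t]|%:R = NR ^+ K :> R.
Proof.
elim: K => [|K IH].
  rewrite (_ : [set t : 0.-tuple T | batches_ok B t] = [set: 0.-tuple T]%SET).
    by rewrite cardsT card_tuple expn0 expr0.
  by apply/setP => t; rewrite !inE (tuple0 t).
have E (m : nat) : #|[set t : m.-tuple T | batches_ok B t]|%:R =
   \sum_(t : m.-tuple T | batches_ok B t) (1 : R).
  rewrite (eq_bigl (fun t => t \in [set t : m.-tuple T | batches_ok B t])); last by move=> t; rewrite inE.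
  by rewrite sumr_const.
rewrite E sum_tuple_cons.
rewrite (eq_bigr (fun _ => NR ^+ K)); last by move=> S _; rewrite -E IH.
by rewrite sum_sets_const exprS.
Qed.

Lemma NR_gt0 : (B <= n)%N -> 0 < NR.
Proof.
move=> Bn; rewrite /NR card_draws card_ord ltr0n bin_gt0 //.
Qed.

Lemma Exp0 (g : 0.-tuple T -> R) : Exp B g = g [tuple].
Proof.
rewrite /Exp (den_eq 0) expr0 divr1.
rewrite (eq_bigl (fun t => t \in [set: 0.-tuple T]%SET)); last by move=> t; rewrite inE (tuple0 t).
rewrite (eq_bigr (fun _ => g [tuple])); last by move=> t _; rewrite (tuple0 t).
by rewrite sumr_const cardsT card_tuple expn0.
Qed.

Lemma ExpS (Bn : (B <= n)%N) K (g : K.+1.-tuple T -> R) :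
  Exp B g = NR^-1 * \sum_(S : T | #|S| == B) Exp B (fun t : K.-tuple T => g [tuple of S :: t]).
Proof.
have N0 : NR != 0 by rewrite gt_eqF // NR_gt0.
rewrite /Exp !den_eq sum_tuple_cons exprS invfM mulrC -mulrA mulr_sumr; congr (_ * _).
by apply: eq_bigr => S _; rewrite mulrC.
Qed.

Lemma Exp_le K (g h : K.-tuple T -> R) : (forall t, g t <= h t) -> Exp B g <= Exp B h.
Proof.
move=> gh; rewrite /Exp; apply: ler_wpM2r; first by rewrite invr_ge0 ler0n.
by apply: ler_sum.
Qed.

Lemma Exp_lin K (g : K.-tuple T -> R) (a b : R) (Bn : (B <= n)%N) :
  Exp B (fun t => a * g t + b) = a * Exp B g + b.
Proof.
rewrite /Exp big_split /= -mulr_sumr mulrDl mulrA.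
have -> : \sum_(t : K.-tuple T | batches_ok B t) b = b * #|[set t : K.-tuple T | batches_ok B t]|%:R.
  rewrite (eq_bigl (fun t => t \in [set t : K.-tuple T | batches_ok B t])); last by move=> t; rewrite inE.
  by rewrite sumr_const mulr_natr.
rewrite den_eq mulfK //.
by rewrite expf_neq0 // gt_eqF // NR_gt0.
Qed.

Lemma count_sym (i j : 'I_n) :
  \sum_(S : T | #|S| == B) ((i \in S)%:R : R) = \sum_(S : T | #|S| == B) (j \in S)%:R.
Proof.
rewrite (reindex_inj (imset_inj (@perm_inj _ (tperm i j)))) /=.
apply: eq_big => S; first by rewrite card_imset //; exact: perm_inj.
move=> _; rewrite -{1}(tpermR i j) mem_imset //; exact: perm_inj.
Qed.

Lemma avg_sets (a : 'I_n -> R) : (0 < B)%N -> (0 < n)%N ->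
  \sum_(S : T | #|S| == B) (#|S|%:R^-1 * \sum_(i in S) a i) = NR / n%:R * \sum_i a i.
Proof.
move=> B0 n0.
transitivity (\sum_(S : T | #|S| == B) B%:R^-1 * \sum_(i in S) a i).
  by apply: eq_bigr => S /eqP ->.
rewrite -mulr_sumr.
pose c (i : 'I_n) := \sum_(S : T | #|S| == B) ((i \in S)%:R : R).
have E1 : \sum_(S : T | #|S| == B) \sum_(i in S) a i = \sum_i c i * a i.
  rewrite (eq_bigr (fun S : T => \sum_i (if i \in S then a i else 0))); last first.
    by move=> S _; rewrite big_mkcond.
  rewrite exchange_big /=; apply: eq_bigr => i _; rewrite /c mulr_suml.
  by apply: eq_bigr => S _; case: (i \in S); rewrite ?mul1r ?mul0r.
have E2 : \sum_i c i = B%:R * NR.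
  rewrite /c exchange_big /= mulrC -sum_sets_const; apply: eq_bigr => S /eqP <-.
  rewrite -sum1_card natr_sum [RHS]big_mkcond /=; apply: eq_bigr => i _.
  by case: (i \in S).
pose i0 : 'I_n := Ordinal n0.
have E3 i : c i = c i0 by apply: count_sym.
rewrite (eq_bigr (fun i => c i0)) in E2; last by move=> i _; exact: E3.
rewrite sumr_const card_ord -[c i0 *+ n]mulr_natl in E2.
rewrite E1 (eq_bigr (fun i => c i0 * a i)); last by move=> i _; rewrite E3.
rewrite -mulr_sumr mulrA.
have -> : c i0 = B%:R * NR / n%:R by rewrite -E2 [_ * c i0]mulrC mulfK // pnatr_eq0 -lt0n.
field; rewrite !pnatr_eq0 -!lt0n B0 n0 //.
Qed.
End Prob.


Section SGD.
Variables (R : realType) (d n B : nat) (fs : 'I_n -> 'rV[R]_d -> R) (Lm c gb : R).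
Variable xs : 'rV[R]_d.
Notation vec := 'rV[R]_d.
Hypothesis Lm0 : 0 < Lm.
Hypothesis Hsm : forall i, lipsq Lm (fs i).
Hypothesis Hcvx : forall i, convex_fun (fs i).
Hypothesis Hnn : forall i x, 0 <= fs i x.
Hypothesis n0 : (0 < n)%N.
Hypothesis B0 : (0 < B)%N.
Hypothesis Bn : (B <= n)%N.
Hypothesis c0 : 0 < c.
Hypothesis gb0 : 0 < gb.

Definition al : R := Num.min (2 * c * Lm)^-1 gb.

Lemma al_pos : 0 < al.
Proof. by rewrite lt_min gb0 andbT invr_gt0 !mulr_gt0. Qed.

Lemma al_gb : al <= gb.
Proof. by rewrite ge_min lexx orbT. Qed.

Lemma al_L : al <= (2 * c * Lm)^-1.
Proof. by rewrite ge_min lexx. Qed.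

Lemma step_facts (S : {set 'I_n}) (x : vec) : #|S| = B -> gradS fs S x != 0 ->
  let gam := sps_step fs c gb S x in
  [/\ al <= gam, gam <= gb, 0 < sqnorm (gradS fs S x) &
      gam * (c * sqnorm (gradS fs S x)) <= fS fs S x].
Proof.
move=> SB gn0 gam.
set g := gradS fs S x; set G := sqnorm g; set F := fS fs S x.
have Gp : 0 < G.
  rewrite lt_def sqnorm_ge0 andbT; apply/eqP => /sqnorm_eq0 g0.
  by move/eqP: gn0; rewrite -/g g0.
have S0 : (0 < #|S|)%N by rewrite SB.
have GF := fS_grad Lm0 Hsm Hnn x S0; rewrite -/g -/G -/F in GF.
have Fp : 0 < F.
  have : 0 < 2 * Lm * F by apply: (lt_le_trans Gp).
  by rewrite pmulr_rgt0 // mulr_gt0.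
have cG : 0 < c * G by apply: mulr_gt0.
split.
- rewrite /gam /sps_step le_min al_gb andbT -/g -/G -/F.
  apply: (le_trans al_L).
  rewrite -(@ler_pM2r _ (c * G)) // mulfVK ?gt_eqF //.
  rewrite ler_pdivrMl ?mulr_gt0 //. 
  have -> : 2 * c * Lm * F = c * (2 * Lm * F) by ring.
  by rewrite ler_pM2l.
- by rewrite /gam /sps_step ge_min lexx orbT.
- exact: Gp.
- have : gam <= F / (c * G) by rewrite /gam /sps_step ge_min lexx.
  by rewrite -(@ler_pM2r _ (c * G)) // mulfVK ?gt_eqF.
Qed.


Lemma gbar_dot (x u : vec) : dotv (gbar fs x) u = n%:R^-1 * \sum_i dotv (grad (fs i) x) u.
Proof. by rewrite /gbar dotvZl dotv_suml. Qed.

Lemma fS_lin (S : {set 'I_n}) (x u : vec) (p q r : R) :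
  p * fS fs S x + q * fS fs S xs + r * dotv (gradS fs S x) u =
  #|S|%:R^-1 * \sum_(i in S) (p * fs i x + q * fs i xs + r * dotv (grad (fs i) x) u).
Proof.
rewrite /fS /gradS dotvZl dotv_suml !big_split /= -!mulr_sumr; ring.
Qed.

Lemma favg_lin (x u : vec) (p q r : R) :
  p * favg fs x + q * favg fs xs + r * dotv (gbar fs x) u =
  n%:R^-1 * \sum_i (p * fs i x + q * fs i xs + r * dotv (grad (fs i) x) u).
Proof.
rewrite /favg gbar_dot !big_split /= -!mulr_sumr; ring.
Qed.

Lemma avg_lin (x u : vec) (K0 p q r : R) :
  (NR R n B)^-1 * \sum_(S : {set 'I_n} | #|S| == B)
     (K0 + (p * fS fs S x + q * fS fs S xs + r * dotv (gradS fs S x) u)) =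
  K0 + (p * favg fs x + q * favg fs xs + r * dotv (gbar fs x) u).
Proof.
have N0 : NR R n B != 0 by rewrite gt_eqF // NR_gt0.
rewrite big_split /= sum_sets_const.
rewrite (eq_bigr (fun S : {set 'I_n} => #|S|%:R^-1 * \sum_(i in S)
   (p * fs i x + q * fs i xs + r * dotv (grad (fs i) x) u))); last first.
  by move=> S _; rewrite fS_lin.
rewrite avg_sets // favg_lin mulrDr mulrA mulVf // mul1r; congr (_ + _).
by rewrite !mulrA mulVf // mul1r.
Qed.

Lemma step_i (S : {set 'I_n}) (x : vec) : #|S| = B -> c = 1 ->
  sqnorm (sgd_step fs c gb x S - xs) <= sqnorm (x - xs) +
    (- al * fS fs S x + (al + 2 * gb) * fS fs S xs + 0 * dotv (gradS fs S x) (x - xs)).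
Proof.
move=> SB c1.
have cv := fS_cvx Lm0 Hsm Hcvx S x xs.
have Fn := fS_nn Hnn S x; have Fsn := fS_nn Hnn S xs.
have ap := al_pos; have ag := al_gb.
rewrite mul0r addr0 /sgd_step; case: eqP => [g0|/eqP gn0].
  rewrite g0 dotv0l addr0 in cv.
  have : 0 <= al * (fS fs S xs - fS fs S x) by apply: mulr_ge0; lra.
  have : 0 <= gb * fS fs S xs by apply: mulr_ge0; lra.
  lra.
have [h1 h2 h3 h4] := step_facts SB gn0.
move: cv Fn Fsn h1 h2 h3 h4; set gam := sps_step _ _ _ _ _; set g := gradS fs S x.
set G := sqnorm g; set F := fS fs S x; set Fs := fS fs S xs => cv Fn Fsn h1 h2 h3 h4.
rewrite c1 mul1r in h4.
set u := x - xs.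
have -> : x - gam *: g - xs = u - gam *: g by rewrite /u addrAC.
rewrite sqnormB dotvZr sqnormZ.
have e1 : dotv g (xs - x) = - dotv u g by rewrite dotvC -opprB dotvNl.
rewrite e1 in cv; set e := dotv u g in cv *.
have gp : 0 <= gam by lra.
have p1 : gam * (F - Fs) <= gam * e by apply: ler_wpM2l => //; lra.
have p2 : gam * (gam * G) <= gam * F by apply: ler_wpM2l.
have p3 : al * F <= gam * F by apply: ler_wpM2r.
have p4 : gam * Fs <= gb * Fs by apply: ler_wpM2r.
have p5 : 0 <= al * Fs by apply: mulr_ge0; lra.
have -> : gam ^+ 2 * G = gam * (gam * G) by ring.
rewrite !mulrBr in p1.
lra.
Qed.

Lemma step_ii (S : {set 'I_n}) (x : vec) : #|S| = B -> 1 / 2 <= c ->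
  sqnorm (sgd_step fs c gb x S - xs) <= sqnorm (x - xs) +
    (2 * al * fS fs S x + (2 * gb - 2 * al) * fS fs S xs +
     (- 2 * al) * dotv (gradS fs S x) (x - xs)).
Proof.
move=> SB c1.
have cv := fS_cvx Lm0 Hsm Hcvx S x xs.
have Fn := fS_nn Hnn S x; have Fsn := fS_nn Hnn S xs.
have ap := al_pos; have ag := al_gb.
rewrite /sgd_step; case: eqP => [g0|/eqP gn0].
  rewrite g0 dotv0l mulr0 addr0.
  have : 0 <= al * fS fs S x by apply: mulr_ge0; lra.
  have : 0 <= (gb - al) * fS fs S xs by apply: mulr_ge0; lra.
  lra.
have [h1 h2 h3 h4] := step_facts SB gn0.
move: cv Fn Fsn h1 h2 h3 h4; set gam := sps_step _ _ _ _ _; set g := gradS fs S x.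
set G := sqnorm g; set F := fS fs S x; set Fs := fS fs S xs => cv Fn Fsn h1 h2 h3 h4.
set u := x - xs.
have -> : x - gam *: g - xs = u - gam *: g by rewrite /u addrAC.
rewrite sqnormB dotvZr sqnormZ.
have e1 : dotv g (xs - x) = - dotv g u by rewrite -opprB dotvC dotvNl dotvC.
rewrite e1 in cv; rewrite (dotvC u g); set e := dotv g u in cv *.
have gp : 0 <= gam by lra.
have gG : 0 <= gam * G by apply: mulr_ge0; lra.
have q1 : gam * G <= 2 * F.
  have : (gam * G) / 2 <= gam * (c * G).
    have -> : gam * (c * G) = c * (gam * G) by ring.
    have : 1 / 2 * (gam * G) <= c * (gam * G) by apply: ler_wpM2r.
    lra.
  lra.
have p2 : gam * (gam * G) <= gam * (2 * F) by apply: ler_wpM2l.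
have p1 : al * (e - F + Fs) <= gam * (e - F + Fs) by apply: ler_wpM2r; lra.
have p4 : gam * Fs <= gb * Fs by apply: ler_wpM2r.
have -> : gam ^+ 2 * G = gam * (gam * G) by ring.
rewrite ?mulrDr ?mulrBr ?mulrN in p1. rewrite ?mulrDr ?mulrN in p1.
lra.
Qed.

Lemma avg_affine (a : {set 'I_n} -> R) (p q : R) :
  (NR R n B)^-1 * \sum_(S : {set 'I_n} | #|S| == B) (p * a S + q) =
  p * ((NR R n B)^-1 * \sum_(S : {set 'I_n} | #|S| == B) a S) + q.
Proof.
have N0 : NR R n B != 0 by rewrite gt_eqF // NR_gt0.
rewrite big_split /= sum_sets_const -mulr_sumr; field; exact: N0.
Qed.

Lemma avg_mono (a b : {set 'I_n} -> R) :
  (forall S : {set 'I_n}, #|S| = B -> a S <= b S) ->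
  (NR R n B)^-1 * \sum_(S : {set 'I_n} | #|S| == B) a S <=
  (NR R n B)^-1 * \sum_(S : {set 'I_n} | #|S| == B) b S.
Proof.
move=> ab; apply: ler_wpM2l; first by rewrite invr_ge0 ltW // NR_gt0.
by apply: ler_sum => S /eqP; exact: ab.
Qed.

Lemma avg_i (x : vec) : c = 1 ->
  (NR R n B)^-1 * \sum_(S : {set 'I_n} | #|S| == B) sqnorm (sgd_step fs c gb x S - xs)
  <= sqnorm (x - xs) - al * (favg fs x - favg fs xs) + 2 * gb * favg fs xs.
Proof.
move=> c1.
apply: (le_trans (avg_mono (fun S SB => step_i x SB c1))).
rewrite avg_lin; lra.
Qed.

Lemma avg_ii (mu : R) (x : vec) : 1 / 2 <= c -> 0 < mu -> strongly_convex mu (favg fs) ->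
  (NR R n B)^-1 * \sum_(S : {set 'I_n} | #|S| == B) sqnorm (sgd_step fs c gb x S - xs)
  <= (1 - mu * al) * sqnorm (x - xs) + 2 * gb * favg fs xs.
Proof.
move=> c12 mu0 sc.
apply: (le_trans (avg_mono (fun S SB => step_ii x SB c12))).
rewrite avg_lin.
have H := favg_SC Lm0 Hsm x xs n0 mu0 sc.
have e1 : dotv (gbar fs x) (xs - x) = - dotv (gbar fs x) (x - xs).
  by rewrite -opprB dotvC dotvNl dotvC.
have e2 : sqnorm (xs - x) = sqnorm (x - xs) by rewrite -opprB sqnormN.
rewrite e1 e2 in H.
have ap := al_pos.
have : al * (favg fs x - favg fs xs + mu / 2 * sqnorm (x - xs)) <= al * dotv (gbar fs x) (x - xs).
  by apply: ler_wpM2l; lra.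
move=> H2; rewrite !mulrDr mulrN in H2.
have e3 : al * (mu / 2 * sqnorm (x - xs)) = (mu * al) * sqnorm (x - xs) / 2 by ring.
rewrite e3 in H2.
have -> : (1 - mu * al) * sqnorm (x - xs) = sqnorm (x - xs) - (mu * al) * sqnorm (x - xs) by ring.
have -> : - 2 * al * dotv (gbar fs x) (x - xs) = - 2 * (al * dotv (gbar fs x) (x - xs)) by ring.
have -> : 2 * al * favg fs x = 2 * (al * favg fs x) by ring.
have -> : (2 * gb - 2 * al) * favg fs xs = 2 * gb * favg fs xs - 2 * (al * favg fs xs) by ring.
lra.
Qed.

Lemma conv_ii (mu : R) : 1 / 2 <= c -> 0 < mu -> strongly_convex mu (favg fs) ->
  0 <= 1 - mu * al -> forall k (x0 : vec),
  Exp B (fun t : k.-tuple {set 'I_n} => sqnorm (sgd_iter fs c gb x0 t - xs)) <=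
  (1 - mu * al) ^+ k * sqnorm (x0 - xs) + 2 * gb * favg fs xs * \sum_(j < k) (1 - mu * al) ^+ j.
Proof.
move=> c12 mu0 sc r0; elim => [|k IH] x0.
  by rewrite Exp0 big_ord0 expr0 mul1r mulr0 addr0.
rewrite (ExpS Bn).
apply: (le_trans (avg_mono (b := fun S => (1 - mu * al) ^+ k * sqnorm (sgd_step fs c gb x0 S - xs)
   + 2 * gb * favg fs xs * \sum_(j < k) (1 - mu * al) ^+ j) _)).
  by move=> S _; apply: IH.
rewrite avg_affine.
have := avg_ii x0 c12 mu0 sc.
move=> H.
have H2 := ler_wpM2l (exprn_ge0 k r0) H.
rewrite big_ord_recr /= exprS.
set P := (1 - mu * al) ^+ k in H2 *.
set A := (NR R n B)^-1 * _ in H2 *.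
rewrite mulrDr in H2.
have -> : 2 * gb * favg fs xs * (\sum_(i < k) (1 - mu * al) ^+ i + P) =
   2 * gb * favg fs xs * \sum_(i < k) (1 - mu * al) ^+ i + P * (2 * gb * favg fs xs) by ring.
have -> : (1 - mu * al) * P * sqnorm (x0 - xs) = P * ((1 - mu * al) * sqnorm (x0 - xs)) by ring.
lra.
Qed.

Lemma lyap_i : c = 1 -> forall K (x0 : vec),
  Exp B (fun t : K.-tuple {set 'I_n} =>
    al * \sum_(k < K) (favg fs (sgd_iter fs c gb x0 (take k t)) - favg fs xs)
    + sqnorm (sgd_iter fs c gb x0 t - xs)) <=
  sqnorm (x0 - xs) + K%:R * (2 * gb * favg fs xs).
Proof.
move=> c1; elim => [|K IH] x0.
  by rewrite Exp0 big_ord0 mulr0 add0r mul0r addr0.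
rewrite (ExpS Bn).
set b := al * (favg fs x0 - favg fs xs).
have E (S : {set 'I_n}) : Exp B (fun t : K.-tuple {set 'I_n} =>
    al * \sum_(k < K.+1) (favg fs (sgd_iter fs c gb x0 (take k [tuple of S :: t])) - favg fs xs)
    + sqnorm (sgd_iter fs c gb x0 [tuple of S :: t] - xs)) =
  1 * Exp B (fun t : K.-tuple {set 'I_n} =>
    al * \sum_(k < K) (favg fs (sgd_iter fs c gb (sgd_step fs c gb x0 S) (take k t)) - favg fs xs)
    + sqnorm (sgd_iter fs c gb (sgd_step fs c gb x0 S) t - xs)) + b.
  rewrite -Exp_lin //; congr (Exp B _); apply/funext => t.
  rewrite big_ord_recl /= /b; ring.
rewrite (eq_bigr _ (fun S _ => E S)).
apply: (le_trans (avg_mono (b := fun S => 1 * (sqnorm (sgd_step fs c gb x0 S - xs)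
   + K%:R * (2 * gb * favg fs xs)) + b) _)).
  by move=> S _; rewrite lerD2r ler_pM2l //; apply: IH.
rewrite avg_affine mul1r.
rewrite (eq_bigr (fun S => 1 * sqnorm (sgd_step fs c gb x0 S - xs) + K%:R * (2 * gb * favg fs xs))); last first.
  by move=> S _; rewrite mul1r.
rewrite avg_affine mul1r.
have := avg_i x0 c1.
rewrite -/b mulrSr; lra.
Qed.

End SGD.

End Helpers.
Import Helpers.

Lemma geo (R : realType) (r : R) k : (1 - r) * \sum_(j < k) r ^+ j = 1 - r ^+ k.
Proof.
elim: k => [|k IH]; first by rewrite big_ord0 mulr0 expr0 subrr.
by rewrite big_ord_recr /= mulrDr IH exprS; ring.
Qed.

Theorem corollary1 (R : realType) (d n B : nat)
  (fs : 'I_n -> 'rV[R]_d -> R) (L : 'I_n -> R) (xstar x0 : 'rV[R]_d) (c gb : R) :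
  (0 < n)%N -> (0 < B)%N -> (B <= n)%N ->
  (forall i, 0 < L i) ->
  (forall i, convex_fun (fs i)) ->
  (forall i, smooth (L i) (fs i)) ->
  (forall i x, 0 <= fs i x) ->
  (forall y, favg fs xstar <= favg fs y) ->
  0 < c -> 0 < gb ->
  let alpha := Num.min (2 * c * Lmax L)^-1 gb in
  (* (i) *)
  (c = 1 ->
   forall K : nat, (1 <= K)%N ->
     Exp B (fun t : K.-tuple {set 'I_n} =>
              favg fs (xbar fs c gb x0 t) - favg fs xstar)
     <= sqnorm (x0 - xstar) / (alpha * K%:R) + 2 * gb * favg fs xstar / alpha)
  /\
  (* (ii) *)
  (forall mu : R, 0 < mu -> strongly_convex mu (favg fs) -> 1 / 2 <= c ->
   forall k : nat,
     Exp B (fun t : k.-tuple {set 'I_n} =>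
              sqnorm (sgd_iter fs c gb x0 t - xstar))
     <= (1 - mu * alpha) ^+ k * sqnorm (x0 - xstar)
        + 2 * gb * favg fs xstar / (mu * alpha)).
Proof.
move=> n0 B0 Bn Lp Hcvx Hsmooth Hnn Hopt c0 gb0 alpha.
set Lm := Lmax L.
have LLm i : L i <= Lm by rewrite /Lm /Lmax; exact: le_bigmax.
have Lm0 : 0 < Lm by apply: (lt_le_trans (Lp (Ordinal n0))).
have Hsm i : lipsq Lm (fs i) by apply: (smooth_lipsq (Lp i) (LLm i) (Hsmooth i)).
have ap : 0 < alpha := al_pos Lm0 c0 gb0.
have fsn : 0 <= favg fs xstar.
  apply: mulr_ge0; first by rewrite invr_ge0 ler0n.
  by apply: sumr_ge0 => i _.
split.
- move=> c1 K K1.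
  have Kp : 0 < K%:R :> R by rewrite ltr0n.
  have aK : 0 < alpha * K%:R by apply: mulr_gt0.
  set C := 2 * gb * favg fs xstar.
  have step1 : Exp B (fun t : K.-tuple {set 'I_n} =>
              favg fs (xbar fs c gb x0 t) - favg fs xstar) <=
     Exp B (fun t : K.-tuple {set 'I_n} => (alpha * K%:R)^-1 *
    (alpha * \sum_(k < K) (favg fs (sgd_iter fs c gb x0 (take k t)) - favg fs xstar)
    + sqnorm (sgd_iter fs c gb x0 t - xstar)) + 0).
    apply: Exp_le.
    move=> t; rewrite addr0 /xbar.
    have J := favg_jensen Lm0 Hsm Hcvx (fun k : 'I_K => sgd_iter fs c gb x0 (take k t)) K1.
    rewrite sumrB sumr_const card_ord -[favg fs xstar *+ K]mulr_natl.
    set S1 := \sum_(k < K) favg fs _ in J *.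
    have e : (alpha * K%:R)^-1 * (alpha * (S1 - K%:R * favg fs xstar) +
        sqnorm (sgd_iter fs c gb x0 t - xstar)) =
      K%:R^-1 * S1 - favg fs xstar + (alpha * K%:R)^-1 * sqnorm (sgd_iter fs c gb x0 t - xstar).
      by field; rewrite !gt_eqF.
    rewrite e.
    have : 0 <= (alpha * K%:R)^-1 * sqnorm (sgd_iter fs c gb x0 t - xstar).
      by apply: mulr_ge0; [rewrite invr_ge0 ltW | exact: sqnorm_ge0].
    lra.
  apply: (le_trans step1).
  rewrite Exp_lin // addr0.
  have H := lyap_i xstar Lm0 Hsm Hcvx Hnn n0 B0 Bn c0 gb0 c1 K x0.
  apply: (le_trans (ler_wpM2l _ H)); first by rewrite invr_ge0 ltW.
  rewrite mulrDr -/C; apply: lerD; first by rewrite mulrC.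
  rewrite le_eqVlt; apply/orP; left; apply/eqP; field; rewrite !gt_eqF //.
- move=> mu mu0 sc c12 k.
  set C := 2 * gb * favg fs xstar.
  have Cn : 0 <= C by apply: mulr_ge0 => //; apply: mulr_ge0; lra.
  have ma : 0 < mu * alpha by apply: mulr_gt0.
  have [d0|dp] := posnP d.
    have sq0 (w : 'rV[R]_d) : sqnorm w = 0.
      by rewrite /sqnorm /dotv; move: w; rewrite d0 => w; rewrite big_ord0.
    have st : Exp B (fun t : k.-tuple {set 'I_n} => sqnorm (sgd_iter fs c gb x0 t - xstar)) <=
       Exp B (fun t : k.-tuple {set 'I_n} => 0 * (fun _ => (0:R)) t + 0).
      by apply: Exp_le => t; rewrite sq0 mul0r addr0.
    apply: (le_trans st).
    rewrite Exp_lin // mul0r addr0 sq0 mulr0 add0r.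
    by apply: divr_ge0 => //; rewrite ltW.
  have muL : mu <= Lm := mu_le Lm0 Hsm dp n0 mu0 sc.
  have h1 : alpha <= (2 * c * Lm)^-1 by exact: al_L.
  have cL : 0 < 2 * c * Lm by rewrite !mulr_gt0.
  rewrite -(ler_pM2r cL) mulVf ?gt_eqF // in h1.
  have h2 : mu * alpha <= Lm * alpha by apply: ler_wpM2r => //; rewrite ltW.
  have h3 : 0 <= (2 * c - 1) * (Lm * alpha) by apply: mulr_ge0; [lra|rewrite mulr_ge0 // ltW].
  have h4 : alpha * (2 * c * Lm) = 2 * c * (Lm * alpha) by ring.
  have h5 : (2 * c - 1) * (Lm * alpha) = 2 * c * (Lm * alpha) - Lm * alpha by ring.
  have r0 : 0 <= 1 - mu * alpha by lra.
  have H := conv_ii xstar Lm0 Hsm Hcvx Hnn n0 B0 Bn c0 gb0 c12 mu0 sc r0 k x0.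
  change (al Lm c gb) with alpha in H.
  apply: (le_trans H); rewrite lerD2l -/C.
  rewrite mulrC ler_pdivlMr //.
  have := @geo R (1 - mu * alpha) k.
  rewrite (_ : 1 - (1 - mu * alpha) = mu * alpha); last by ring.
  move=> G.
  have : 0 <= (1 - mu * alpha) ^+ k by apply: exprn_ge0.
  have : (\sum_(j < k) (1 - mu * alpha) ^+ j) * C * (mu * alpha) =
     C * (mu * alpha * \sum_(j < k) (1 - mu * alpha) ^+ j) by ring.
  rewrite G => ->.
  move=> pk; rewrite mulrBr mulr1; have := mulr_ge0 Cn pk; lra.
Qed.
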